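(* For every $T\ge0$, $k\in\mathbb N_+$, $\ell\in\{1,\dots,k\}$ and $n\in\{1,\dots,\ell\}$, $$v(k,T)-v(\ell,T)\ge v(k-n,T)-v(\ell-n,T).$$ Moreover, for every $T\ge0$ and integers $0\le\ell\le k$, $a(\ell,T)\le a(k,T)$.
   Context: Let $\lambda>0$ and let $N$ be a Poisson process with intensity $\lambda$, arrival times $0<\sigma_1<\sigma_2<\cdots$, and natural filtration $\mathcal F_t=\sigma(N_s:s\le t)$. Let $F:[0,\infty)\to[0,\infty)$ be strictly increasing and strictly convex with $F(0)=0$. For $k\in\{0,1,\dots\}$ let $\mathcal A_k$ be the set of $(\mathcal F_t)$-adapted, integer-valued, nonnegative, non-increasing processes $\xi$ with $\xi_0=k$ whose values change only at arrival times of $N$, and $v(k,T)=\inf_{\xi\in\mathcal A_k}\mathbb E[\sum_{i:\sigma_i\le T}F(\xi_{\sigma_i-}-\xi_{\sigma_i})+F(\xi_T)]$ (so $v(0,T)=0$). For $k\in\mathbb N_+$, $a(k,T)$ is the smallest minimizer over $a\in\{1,\dots,k\}$ of $v(k-a,T)+F(a)$, and $a(0,T)=0$. *)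

(* Defs.v *)
From HB Require Import structures.
From mathcomp Require Import all_boot all_order all_algebra.
From mathcomp Require Import all_classical all_reals all_analysis.
Set Implicit Arguments. Unset Strict Implicit. Unset Printing Implicit Defensive.
Import Order.TTheory GRing.Theory Num.Theory.
Local Open Scope classical_set_scope.
Local Open Scope ring_scope.

Section Defs.
Context {R : realType} {d : measure_display} {Omega : measurableType d}.

Definition interarrival (sigma : nat -> Omega -> R) (i : nat) : Omega -> R :=
  fun w => sigma i.+1 w - sigma i w.

(* N is a Poisson process of intensity lam with arrival times
   sigma 1 < sigma 2 < ... (sigma 0 = 0 by convention):
   paths are (surely) strictly increasing and tend to +oo, the arrival
   times are random variables, and the interarrival times are mutually
   independent Exp(lam) random variables. *)
Definition poisson_arrivals (P : probability Omega R) (lam : R)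
    (sigma : nat -> Omega -> R) : Prop :=
  [/\ (forall w, sigma 0%N w = 0),
      (forall w i, sigma i w < sigma i.+1 w),
      (forall w, sigma ^~ w @ \oo --> +oo),
      (forall i, measurable_fun setT (sigma i)) /\
      (forall i (t : R), 0 <= t ->
          P [set w | t < interarrival sigma i w] = (expR (- (lam * t)))%:E) &
      (forall (n : nat) (B : nat -> set R), (forall i, measurable (B i)) ->
          P (\bigcap_(i in `I_n) (interarrival sigma i @^-1` B i)) =
          (\prod_(i < n) P (interarrival sigma i @^-1` B i))%E)].

(* counting process N_t = #{i >= 1 : sigma_i <= t} *)
Definition Ncount (sigma : nat -> Omega -> R) (t : R) (w : Omega) : nat :=
  xget 0%N [set n : nat | sigma n w <= t < sigma n.+1 w].

Definition natfilt (sigma : nat -> Omega -> R) (t : R) : set (set Omega) :=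
  <<s [set A | exists s m, [/\ 0 <= s, s <= t &
                A = [set w | Ncount sigma s w = m]] ] >>.

Definition admissible (sigma : nat -> Omega -> R) (k : nat)
    (xi : R -> Omega -> nat) : Prop :=
  [/\ (forall t, 0 <= t -> forall m : nat, natfilt sigma t [set w | xi t w = m]),
      (forall w s t, 0 <= s -> s <= t -> (xi t w <= xi s w)%N),
      (forall w, xi 0 w = k) &
      (forall w i t, sigma i w <= t -> t < sigma i.+1 w ->
          xi t w = xi (sigma i w) w)].

(* pathwise cost: sum over arrivals sigma_i <= T of F(xi_{sigma_i-} - xi_{sigma_i})
   plus F(xi_T); xi_{sigma_i -} = xi_{sigma_{i-1}} since xi is constant
   on [sigma_{i-1}, sigma_i). *)
Definition cost (sigma : nat -> Omega -> R) (F : R -> R)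
    (xi : R -> Omega -> nat) (T : R) (w : Omega) : R :=
  \sum_(1 <= i < (Ncount sigma T w).+1)
     F (xi (sigma i.-1 w) w - xi (sigma i w) w)%:R
  + F (xi T w)%:R.

Definition value (P : probability Omega R) (sigma : nat -> Omega -> R)
    (F : R -> R) (k : nat) (T : R) : \bar R :=
  ereal_inf [set (\int[P]_w (cost sigma F xi T w)%:E)%E
            | xi in admissible sigma k].

(* a(k,T): smallest minimiser over a in {1..k} of v(k-a,T) + F(a); a(0,T)=0 *)
Definition aopt (P : probability Omega R) (sigma : nat -> Omega -> R)
    (F : R -> R) (k : nat) (T : R) : nat :=
  let c := fun a : nat => (value P sigma F (k - a) T + (F a%:R)%:E)%E in
  head 0%N [seq a <- iota 1 k | all (fun b => (c a <= c b)%E) (iota 1 k)].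

End Defs.

(* Main.v *)
Require Import Defs.
From HB Require Import structures.
From mathcomp Require Import all_boot all_order all_algebra.
From mathcomp Require Import all_classical all_reals all_analysis.
From mathcomp Require Import measurable_realfun.
From mathcomp Require Import ring lra zify.
Import Order.TTheory GRing.Theory Num.Theory.
Local Open Scope classical_set_scope.
Local Open Scope ring_scope.

Definition Fconv {R : realType} (F : R -> R) :=
  forall x y t, 0 <= x -> 0 <= y -> x != y -> 0 < t < 1 ->
      F (t * x + (1 - t) * y) < t * F x + (1 - t) * F y.

Lemma key (R : realType) (F : R -> R) : Fconv F ->
  forall P Q p q : R, 0 <= Q -> Q <= p -> p <= P -> p + q = P + Q ->
  F p + F q <= F P + F Q.
Proof.
move=> Fc P Q p q Q0 Qp pP e.
have [pQ|pQ] := eqVneq p Q.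
  subst p; have -> : q = P by lra.
  by rewrite addrC.
have [pP'|pP'] := eqVneq p P.
  by subst p; have -> : q = Q by lra.
have Qp' : Q < p by rewrite lt_neqAle eq_sym pQ.
have pP2 : p < P by rewrite lt_neqAle pP'.
have PQ : 0 < P - Q by lra.
set t := (p - Q) / (P - Q).
have t0 : 0 < t by apply: divr_gt0; lra.
have t1 : t < 1 by rewrite ltr_pdivrMr //; lra.
have PQn : P != Q by apply/eqP; lra.
have h1 := Fc P Q t ltac:(lra) Q0 PQn ltac:(apply/andP; split; lra).
have h2 := Fc P Q (1 - t) ltac:(lra) Q0 PQn ltac:(apply/andP; split; lra).
have e1 : t * P + (1 - t) * Q = p.
  rewrite /t; field; lra.
have e2 : (1 - t) * P + (1 - (1 - t)) * Q = q.
  have -> : q = P + Q - p by lra.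
  rewrite /t; field; lra.
rewrite e1 in h1; rewrite e2 in h2. lra.
Qed.

Lemma key_nat (R : realType) (F : R -> R) : Fconv F ->
  forall P Q p q : nat, (Q <= p <= P)%N -> (p + q = P + Q)%N ->
  F p%:R + F q%:R <= F P%:R + F Q%:R.
Proof.
move=> Fc P Q p q /andP[Qp pP] e.
apply: key => //; first by rewrite ler_nat.
  by rewrite ler_nat.
by rewrite -!natrD e.
Qed.

Lemma step_ineq (R : realType) (F : R -> R) : Fconv F ->
  forall X0 X1 Y0 Y1 n : nat, (X1 <= X0)%N -> (Y1 <= Y0)%N ->
  F (maxn (X0 - n) Y0 - maxn (X1 - n) Y1)%:R +
  F (minn X0 (Y0 + n) - minn X1 (Y1 + n))%:R <=
  F (X0 - X1)%:R + F (Y0 - Y1)%:R.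
Proof.
move=> Fc X0 X1 Y0 Y1 n h1 h2.
have [le|lt] := leqP (Y0 - Y1) (X0 - X1).
  apply: key_nat => //; first (apply/andP; split); lia.
rewrite [X in _ <= X]addrC.
apply: key_nat => //; first (apply/andP; split); lia.
Qed.

Lemma term_ineq (R : realType) (F : R -> R) : Fconv F ->
  forall X Y n : nat,
  F (maxn (X - n) Y)%:R + F (minn X (Y + n))%:R <= F X%:R + F Y%:R.
Proof.
move=> Fc X Y n.
have [le|lt] := leqP Y X.
  apply: key_nat => //; first (apply/andP; split); lia.
rewrite [X in _ <= X]addrC.
apply: key_nat => //; first (apply/andP; split); lia.
Qed.

Definition xiP {Omega : Type} {R : realType} (n : nat) (xi eta : R -> Omega -> nat) :=
  fun t w => maxn (xi t w - n) (eta t w).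
Definition etaP {Omega : Type} {R : realType} (n : nat) (xi eta : R -> Omega -> nat) :=
  fun t w => minn (xi t w) (eta t w + n).

Lemma sigma_ge0 {R : realType} {Omega : Type} {sigma : nat -> Omega -> R} :
  (forall w, sigma 0%N w = 0) -> (forall w i, sigma i w < sigma i.+1 w) ->
  forall i w, 0 <= sigma i w.
Proof.
move=> s0 sinc; elim=> [|i IH] w; first by rewrite s0.
by apply: le_trans (IH w) (ltW (sinc w i)).
Qed.

Lemma sigma_predle {R : realType} {Omega : Type} {sigma : nat -> Omega -> R} :
  (forall w i, sigma i w < sigma i.+1 w) ->
  forall i w, sigma i.-1 w <= sigma i w.
Proof. by move=> sinc [|i] w //=; exact: ltW. Qed.

Lemma pathwise (R : realType) (d : measure_display) (Omega : measurableType d)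
  (sigma : nat -> Omega -> R) (F : R -> R) (xi eta : R -> Omega -> nat) n T w :
  Fconv F ->
  (forall w, sigma 0%N w = 0) -> (forall w i, sigma i w < sigma i.+1 w) ->
  (forall w s t, 0 <= s -> s <= t -> (xi t w <= xi s w)%N) ->
  (forall w s t, 0 <= s -> s <= t -> (eta t w <= eta s w)%N) ->
  cost sigma F (xiP n xi eta) T w + cost sigma F (etaP n xi eta) T w <=
  cost sigma F xi T w + cost sigma F eta T w.
Proof.
move=> Fc s0 sinc mxi meta.
rewrite /cost addrACA [X in _ <= X]addrACA -!big_split /=.
apply: lerD; last exact: term_ineq.
apply: ler_sum => i _.
apply: step_ineq => //.
  by apply: mxi; [exact: sigma_ge0|exact: sigma_predle].
by apply: meta; [exact: sigma_ge0|exact: sigma_predle].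
Qed.

Lemma sa_U2 (T : Type) (S : set (set T)) : sigma_algebra setT S ->
  forall A B, S A -> S B -> S (A `|` B).
Proof.
case=> S0 SC SU A B SA SB.
have -> : A `|` B = \bigcup_k (if k == 0%N then A else B).
  apply/seteqP; split => w /=.
    by case=> h; [exists 0%N|exists 1%N].
  by case=> k _; case: (k == 0%N) => h; [left|right].
by apply: SU => k; case: (k == 0%N).
Qed.

Lemma sa_I (T : Type) (S : set (set T)) : sigma_algebra setT S ->
  forall A B, S A -> S B -> S (A `&` B).
Proof.
move=> sa A B SA SB; have [S0 SC SU] := sa.
have -> : A `&` B = setT `\` ((setT `\` A) `|` (setT `\` B)).
  apply/seteqP; split => w /=.
    by case=> a b; split => // -[[_ /(_ a)]|[_ /(_ b)]].
  move=> [_ h]; split.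
    by apply: contra_notP h => h; left.
  by apply: contra_notP h => h; right.
by apply: (SC); apply: sa_U2 => //; apply: (SC).
Qed.

Lemma sa_lvl2 (T : Type) (S : set (set T)) : sigma_algebra setT S ->
  forall (f g : T -> nat) (h : nat -> nat -> nat),
  (forall a, S [set w | f w = a]) -> (forall b, S [set w | g w = b]) ->
  forall m, S [set w | h (f w) (g w) = m].
Proof.
move=> sa f g h Sf Sg m; have [S0 SC SU] := sa.
have -> : [set w | h (f w) (g w) = m] = \bigcup_a ([set w | f w = a] `&`
   \bigcup_b (if h a b == m then [set w | g w = b] else set0)).
  apply/seteqP; split => w /=.
    move=> e; exists (f w) => //; split => //; exists (g w) => //.
    by rewrite e eqxx.
  case=> a _ [/= fa [b _]]; case: eqP => // e /= gb.
  by rewrite fa gb.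
apply: (SU) => a; apply: sa_I => //; apply: (SU) => b.
by case: eqP.
Qed.

Lemma adm_xiP (R : realType) (d : measure_display) (Omega : measurableType d)
  (sigma : nat -> Omega -> R) (xi eta : R -> Omega -> nat) k l n :
  (n <= l)%N -> (l <= k)%N ->
  admissible sigma k xi -> admissible sigma (l - n) eta ->
  admissible sigma (k - n) (xiP n xi eta) /\ admissible sigma l (etaP n xi eta).
Proof.
move=> nl lk [a1 a2 a3 a4] [b1 b2 b3 b4].
have sa t : sigma_algebra setT (natfilt sigma t) by exact: smallest_sigma_algebra.
split; split.
- by move=> t t0 m; rewrite /xiP /etaP; exact: (@sa_lvl2 _ _ (sa t) (xi t) (eta t) (fun a b => maxn (a - n) b) (a1 t t0) (b1 t t0) m).
- move=> w s t s0 st; rewrite /xiP.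
  have := a2 w s t s0 st; have := b2 w s t s0 st; lia.
- by move=> w; rewrite /xiP a3 b3; lia.
- by move=> w i t h1 h2; rewrite /xiP (a4 w i t) // (b4 w i t).
- by move=> t t0 m; rewrite /xiP /etaP; exact: (@sa_lvl2 _ _ (sa t) (xi t) (eta t) (fun a b => minn a (b + n)) (a1 t t0) (b1 t t0) m).
- move=> w s t s0 st; rewrite /etaP.
  have := a2 w s t s0 st; have := b2 w s t s0 st; lia.
- by move=> w; rewrite /etaP a3 b3; lia.
- by move=> w i t h1 h2; rewrite /etaP (a4 w i t) // (b4 w i t).
Qed.

Lemma sigma_mono {R : realType} {Omega : Type} {sigma : nat -> Omega -> R} :
  (forall w i, sigma i w < sigma i.+1 w) ->
  forall i j w, (i <= j)%N -> sigma i w <= sigma j w.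
Proof.
move=> sinc i j w /subnK <-; elim: (j - i)%N => [|k IH]; first by rewrite add0n.
by rewrite addSn; apply: le_trans IH (ltW (sinc _ _)).
Qed.

Lemma ncount_unique {R : realType} {Omega : Type} {sigma : nat -> Omega -> R} :
  (forall w i, sigma i w < sigma i.+1 w) ->
  forall t w a b, sigma a w <= t < sigma a.+1 w -> sigma b w <= t < sigma b.+1 w ->
  a = b.
Proof.
move=> sinc t w a b /andP[a1 a2] /andP[b1 b2].
have [ab|ba|//] := ltngtP a b.
  have := sigma_mono sinc a.+1 b w ab; move=> h; exfalso; lra.
have := sigma_mono sinc b.+1 a w ba; move=> h; exfalso; lra.
Qed.

Lemma ncount_spec {R : realType} {d : measure_display} {Omega : measurableType d} {sigma : nat -> Omega -> R} :
  (forall w, sigma 0%N w = 0) -> (forall w i, sigma i w < sigma i.+1 w) ->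
  (forall w, sigma ^~ w @ \oo --> +oo) ->
  forall t w, 0 <= t ->
  sigma (Ncount sigma t w) w <= t < sigma (Ncount sigma t w).+1 w.
Proof.
move=> s0 sinc sdiv t w t0.
rewrite /Ncount.
apply: (@xgetPex _ 0%N [set n : nat | sigma n w <= t < sigma n.+1 w]).
have : exists N, t < sigma N w.
  have := (@cvgryPgt R nat \oo _ (sigma ^~ w)).1 (sdiv w) t; case=> N _ HN.
  by exists N; apply: HN => /=.
move=> ex.
case: (ex_minnP ex) => m tm mmin.
case: m tm mmin => [|m] tm mmin; first by rewrite s0 in tm; lra.
exists m; rewrite /= tm andbT.
by rewrite leNgt; apply/negP => /mmin; rewrite ltnn.
Qed.

Lemma ncount_eq {R : realType} {d : measure_display} {Omega : measurableType d} {sigma : nat -> Omega -> R} :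
  (forall w, sigma 0%N w = 0) -> (forall w i, sigma i w < sigma i.+1 w) ->
  (forall w, sigma ^~ w @ \oo --> +oo) ->
  forall t w m, 0 <= t ->
  (Ncount sigma t w = m) <-> (sigma m w <= t < sigma m.+1 w).
Proof.
move=> s0 sinc sdiv t w m t0; split.
  by move=> <-; apply: ncount_spec.
move=> h; apply: (ncount_unique sinc) h.
exact: ncount_spec.
Qed.

Lemma preT_meas {d1 d2} {T1 : measurableType d1} {T2 : measurableType d2}
  (f : T1 -> T2) B : measurable_fun setT f -> measurable B -> measurable (f @^-1` B).
Proof. by move=> mf mB; rewrite -[_ @^-1` _]setTI; exact: mf. Qed.

Lemma meas_between {R : realType} {d : measure_display} {Omega : measurableType d}
  (f g : Omega -> R) (s : R) :
  measurable_fun setT f -> measurable_fun setT g ->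
  measurable [set w | f w <= s < g w].
Proof.
move=> mf mg.
have -> : [set w | f w <= s < g w] =
   (f @^-1` `]-oo, s]%classic) `&` (g @^-1` `]s, +oo[%classic).
  by apply/seteqP; split => w /=; rewrite !in_itv /= ?andbT => /andP.
apply: measurableI; apply: preT_meas => //; exact: measurable_itv.
Qed.

Lemma meas_between2 {R : realType} {d : measure_display} {Omega : measurableType d}
  (f g : Omega -> R) (s : R) :
  measurable_fun setT f -> measurable_fun setT g ->
  measurable [set w | f w < s < g w].
Proof.
move=> mf mg.
have -> : [set w | f w < s < g w] =
   (f @^-1` `]-oo, s[%classic) `&` (g @^-1` `]s, +oo[%classic).
  by apply/seteqP; split => w /=; rewrite !in_itv /= ?andbT => /andP.
apply: measurableI; apply: preT_meas => //; exact: measurable_itv.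
Qed.

Lemma natfilt_meas {R : realType} {d : measure_display} {Omega : measurableType d}
  (sigma : nat -> Omega -> R) :
  (forall w, sigma 0%N w = 0) -> (forall w i, sigma i w < sigma i.+1 w) ->
  (forall w, sigma ^~ w @ \oo --> +oo) ->
  (forall i, measurable_fun setT (sigma i)) ->
  forall t A, natfilt sigma t A -> measurable A.
Proof.
move=> s0 sinc sdiv msig t.
apply: smallest_sub; first exact: sigma_algebra_measurable.
move=> A [s [m [s0' st ->]]].
have -> : [set w | Ncount sigma s w = m] = [set w | sigma m w <= s < sigma m.+1 w].
  by apply/seteqP; split => w /=; rewrite (ncount_eq s0 sinc sdiv).
exact: meas_between.
Qed.

Lemma xisig_meas {R : realType} {d : measure_display} {Omega : measurableType d}
  (sigma : nat -> Omega -> R) k xi :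
  (forall w, sigma 0%N w = 0) -> (forall w i, sigma i w < sigma i.+1 w) ->
  (forall w, sigma ^~ w @ \oo --> +oo) ->
  (forall i, measurable_fun setT (sigma i)) ->
  admissible sigma k xi ->
  forall i a, measurable [set w | xi (sigma i w) w = a].
Proof.
move=> s0 sinc sdiv msig [a1 a2 a3 a4] i a.
have -> : [set w | xi (sigma i w) w = a] = \bigcup_(q : rat)
   (if 0 <= (ratr q : R) then [set w | sigma i w < ratr q < sigma i.+1 w] `&`
                          [set w | xi (ratr q) w = a] else set0).
  apply/seteqP; split => w /=.
    move=> e; have [q] := rat_in_itvoo (sinc w i).
    rewrite in_itv /= => /andP[q1 q2].
    exists q => //.
    have q0 : 0 <= (ratr q : R).
      by apply: le_trans (ltW q1); exact: (sigma_ge0 s0 sinc).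
    rewrite q0; split; first by apply/andP.
    by rewrite /= (a4 w i) // ltW.
  case=> q _; case: ifP => // q0 [/= /andP[q1 q2] e].
  by rewrite -(a4 w i (ratr q)) // ltW.
apply: bigcupT_measurable_rat => q; case: ifP => // q0.
apply: measurableI; first exact: meas_between2.
exact: (natfilt_meas _ s0 sinc sdiv msig _ _ (a1 _ q0 a)).
Qed.

Lemma lvl_meas {R : realType} {d : measure_display} {Omega : measurableType d}
  (f : Omega -> nat) (phi : nat -> R) :
  (forall a, measurable [set w | f w = a]) ->
  measurable_fun setT (fun w => phi (f w)).
Proof.
move=> mf _ B mB; rewrite setTI.
have -> : (fun w => phi (f w)) @^-1` B = \bigcup_(a in [set a | B (phi a)]) [set w | f w = a].
  apply/seteqP; split => w /=.
    by move=> h; exists (f w).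
  by case=> a /= h ->.
by apply: bigcup_measurable => a _.
Qed.

Lemma cost_meas {R : realType} {d : measure_display} {Omega : measurableType d}
  (sigma : nat -> Omega -> R) (F : R -> R) k xi T :
  (forall w, sigma 0%N w = 0) -> (forall w i, sigma i w < sigma i.+1 w) ->
  (forall w, sigma ^~ w @ \oo --> +oo) ->
  (forall i, measurable_fun setT (sigma i)) ->
  admissible sigma k xi -> 0 <= T ->
  measurable_fun setT (cost sigma F xi T).
Proof.
move=> s0 sinc sdiv msig adm T0.
have mxs := xisig_meas _ _ _ s0 sinc sdiv msig adm.
have mT : forall a, measurable [set w | xi T w = a].
  case: adm => a1 _ _ _ a.
  exact: (natfilt_meas _ s0 sinc sdiv msig _ _ (a1 _ T0 a)).
pose g m := fun w => \sum_(1 <= i < m.+1) F (xi (sigma i.-1 w) w - xi (sigma i w) w)%:R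
   + F (xi T w)%:R.
move=> _ B mB; rewrite setTI.
have -> : cost sigma F xi T @^-1` B =
   \bigcup_m ([set w | Ncount sigma T w = m] `&` (g m @^-1` B)).
  apply/seteqP; split => w /=.
    by move=> h; exists (Ncount sigma T w) => //.
  by case=> m _ [/= e]; rewrite /g /cost e.
apply: bigcup_measurable => m _; apply: measurableI.
  have -> : [set w | Ncount sigma T w = m] = [set w | sigma m w <= T < sigma m.+1 w].
    by apply/seteqP; split => w /=; rewrite (ncount_eq s0 sinc sdiv).
  exact: meas_between.
apply: preT_meas => //.
apply: measurable_funD; last exact: (lvl_meas (xi T) (fun a => F a%:R)).
apply: measurable_sum => i.
apply: (lvl_meas (fun w => xi (sigma i.-1 w) w - xi (sigma i w) w)%N
          (fun a => F a%:R)).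
move=> a; exact: (@sa_lvl2 _ _ (@sigma_algebra_measurable _ Omega) (fun w => xi (sigma i.-1 w) w) (fun w => xi (sigma i w) w) (fun a b => (a - b)%N) (mxs _) (mxs _) a).
Qed.

Lemma cost_ge0 {R : realType} {d : measure_display} {Omega : measurableType d}
  (sigma : nat -> Omega -> R) (F : R -> R) xi T w :
  (forall x, 0 <= x -> 0 <= F x) -> 0 <= cost sigma F xi T w.
Proof.
move=> F0; rewrite /cost; apply: addr_ge0; last exact: F0.
by apply: sumr_ge0 => i _; apply: F0.
Qed.

Lemma inf_helper {R : realType} (c : \bar R) (x : R) (S : set (\bar R)) :
  (0 <= c)%E -> (forall y, S y -> 0 <= y)%E ->
  (forall y, S y -> x%:E <= c + y)%E -> (x%:E <= c + ereal_inf S)%E.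
Proof.
move=> c0 S0 h.
have iS0 : (0 <= ereal_inf S)%E by apply: le_ereal_inf_tmp => y /S0.
case: c c0 h => [r| |] c0 h //.
  have : ((x - r)%:E <= ereal_inf S)%E.
    apply: le_ereal_inf_tmp => y Sy; have := h y Sy.
    have := S0 y Sy.
    case: y Sy => [y'| |] Sy.
    - by rewrite -EFinD !lee_fin => _ h1; lra.
    - by move=> *; rewrite leey.
    - by rewrite leeNy_eq.
  case: (ereal_inf S) iS0 => [s| |] i0.
  - by rewrite -EFinD !lee_fin => h1; lra.
  - by move=> _; rewrite addey ?leey.
  - by move: i0; rewrite leeNy_eq.
rewrite addye ?leey //; apply/eqP => e; by move: iS0; rewrite e leeNy_eq => /eqP.
Qed.

Lemma const_adm {R : realType} {d : measure_display} {Omega : measurableType d}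
  (sigma : nat -> Omega -> R) k : admissible sigma k (fun _ _ => k).
Proof.
split => //.
move=> t _ m.
have [S0 SC SU] : sigma_algebra setT (natfilt sigma t) by exact: smallest_sigma_algebra.
have [->|km] := eqVneq k m.
  have -> : [set w : Omega | m = m] = setT `\` set0.
    by rewrite setD0; apply/seteqP; split => w //=.
  exact: SC.
have -> : [set w : Omega | k = m] = set0.
  by apply/seteqP; split => w //= /eqP; rewrite (negbTE km).
exact: S0.
Qed.

Lemma value_bnd {R : realType} {d : measure_display} {Omega : measurableType d}
  (P : probability Omega R) (sigma : nat -> Omega -> R) (F : R -> R) k T :
  F 0 = 0 -> (forall x, 0 <= x -> 0 <= F x) ->
  (0 <= value P sigma F k T)%E /\ (value P sigma F k T <= (F k%:R)%:E)%E.
Proof.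
move=> F00 F0; split.
  apply: le_ereal_inf_tmp => y [xi _ <-].
  by apply: integral_ge0 => w _; rewrite lee_fin; exact: cost_ge0.
apply: ereal_inf_lbound; exists (fun _ _ => k); first exact: const_adm.
have -> : (fun w => (cost sigma F (fun _ _ => k) T w)%:E) = cst (F k%:R)%:E.
  apply/funext => w; rewrite /cost /= big1 ?add0r // => i _.
  by rewrite subnn F00.
rewrite integral_cst //; have h : (P setT = 1)%E by exact: probability_setT.
transitivity ((F k%:R)%:E * 1)%E; last exact: mule1.
by congr (_ * _)%E; exact: h.
Qed.

Lemma valE {R : realType} {d : measure_display} {Omega : measurableType d}
  (P : probability Omega R) (sigma : nat -> Omega -> R) (F : R -> R) k T :
  F 0 = 0 -> (forall x, 0 <= x -> 0 <= F x) ->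
  value P sigma F k T = (fine (value P sigma F k T))%:E.
Proof.
move=> F00 F0; have [h0 h1] := value_bnd P sigma F k T F00 F0.
by rewrite fineK // ge0_fin_numE // (le_lt_trans h1) // ltey.
Qed.

Lemma part1 {R : realType} {d : measure_display} {Omega : measurableType d}
  (P : probability Omega R) (lam : R) (sigma : nat -> Omega -> R) (F : R -> R) :
  poisson_arrivals P lam sigma -> F 0 = 0 -> (forall x, 0 <= x -> 0 <= F x) ->
  Fconv F -> forall T k l n, 0 <= T -> (n <= l)%N -> (l <= k)%N ->
  fine (value P sigma F (k - n) T) + fine (value P sigma F l T) <=
  fine (value P sigma F k T) + fine (value P sigma F (l - n) T).
Proof.
move=> [s0 sinc sdiv [msig _] _] F00 F0 Fc T k l n T0 nl lk.
set V := fun m => fine (value P sigma F m T).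
have vE m : value P sigma F m T = (V m)%:E by exact: valE.
have v0 m : (0 <= value P sigma F m T)%E by have [] := value_bnd P sigma F m T F00 F0.
have I0 : forall xi, (0 <= \int[P]_w (cost sigma F xi T w)%:E)%E.
  by move=> xi; apply: integral_ge0 => w _; rewrite lee_fin; exact: cost_ge0.
have mI : forall m xi, admissible sigma m xi ->
   measurable_fun setT ((EFin \o cost sigma F xi T) : Omega -> \bar R).
  by move=> m xi a; exact: ((@measurable_EFinP _ _ _ setT (cost sigma F xi T)).2 (cost_meas _ _ _ _ _ s0 sinc sdiv msig a T0)).
suff : ((V (k - n)%N + V l)%:E <= value P sigma F (l - n) T + value P sigma F k T)%E.
  by rewrite !vE -EFinD lee_fin /V; lra.
apply: inf_helper => //; first by move=> y [xi _ <-].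
move=> y [xi axi <-].
rewrite addeC; apply: inf_helper => //; first by move=> y' [eta _ <-].
move=> y' [eta aeta <-].
have [ax ae] := adm_xiP _ _ _ _ _ _ _ _ _ nl lk axi aeta.
rewrite EFinD -!vE.
apply: (@le_trans _ _ (\int[P]_w (cost sigma F (xiP n xi eta) T w)%:E +
                       \int[P]_w (cost sigma F (etaP n xi eta) T w)%:E)%E).
  by apply: leeD; apply: ereal_inf_lbound; [exists (xiP n xi eta)|exists (etaP n xi eta)].
rewrite -!ge0_integralD //; try (by move=> w _; rewrite lee_fin; exact: cost_ge0);
  try (by exact: mI ax); try (by exact: mI ae); try (by exact: mI axi); try (by exact: mI aeta).
apply: ge0_le_integral => //.
- by move=> w _; rewrite -EFinD lee_fin; apply: addr_ge0; exact: cost_ge0.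
- by apply/measurable_EFinP; apply: measurable_funD;
    apply/measurable_EFinP; [exact: mI ax|exact: mI ae].
- by apply/measurable_EFinP; apply: measurable_funD;
    apply/measurable_EFinP; [exact: mI axi|exact: mI aeta].
- move=> w _; rewrite -!EFinD lee_fin.
  case: axi => _ a2 _ _; case: aeta => _ b2 _ _.
  exact: pathwise.
Qed.
Lemma ex_min_seq {R : realType} (C : nat -> R) (s : seq nat) : s != [::] ->
  exists2 a, a \in s & forall b, b \in s -> C a <= C b.
Proof.
elim: s => [//|x s IH] _.
case: (eqVneq s [::]) => [->|sn].
  by exists x; rewrite ?mem_seq1 // => b; rewrite mem_seq1 => /eqP ->.
have [a ain amin] := IH sn.
have [le|lt] := leP (C x) (C a).
  exists x; first exact: mem_head.
  move=> b; rewrite in_cons => /orP[/eqP -> //|bs].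
  exact: le_trans le (amin b bs).
exists a; first by rewrite in_cons ain orbT.
move=> b; rewrite in_cons => /orP[/eqP ->|bs]; [exact: ltW|exact: amin].
Qed.

Definition hmin {R : realType} (C : nat -> R) k :=
  head 0%N [seq a <- iota 1 k | all (fun b => C a <= C b) (iota 1 k)].

Lemma head_min {R : realType} (C : nat -> R) k : (1 <= k)%N ->
  let m := hmin C k in
  [/\ (1 <= m <= k)%N, (forall b, (1 <= b <= k)%N -> C m <= C b) &
      (forall a, (1 <= a <= k)%N -> (forall b, (1 <= b <= k)%N -> C a <= C b) ->
        (m <= a)%N)].
Proof.
move=> k1 m.
have memI b : (b \in iota 1 k) = (1 <= b <= k)%N by rewrite mem_iota; lia.
set p := fun a => all (fun b => C a <= C b) (iota 1 k).
have pP a : p a = `[< forall b, (1 <= b <= k)%N -> C a <= C b >].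
  apply/idP/asboolP.
    by move=> /allP h b bk; apply: h; rewrite memI.
  by move=> h; apply/allP => b; rewrite memI; exact: h.
have hasp : has p (iota 1 k).
  have [a ain amin] := @ex_min_seq R C (iota 1 k) ltac:(by rewrite -size_eq0 size_iota -lt0n).
  by apply/hasP; exists a => //; apply/allP.
have srt : sorted ltn [seq a <- iota 1 k | p a].
  by apply: sorted_filter; [exact: ltn_trans|exact: iota_ltn_sorted].
rewrite has_filter in hasp.
rewrite /m /hmin -/p.
case E: [seq a <- iota 1 k | p a] hasp srt => [//|x s] _ srt /=.
have xin : x \in [seq a <- iota 1 k | p a] by rewrite E mem_head.
rewrite mem_filter in xin; case/andP: xin => px xI.
split.
- by rewrite -memI.
- by move=> b bk; move: px; rewrite pP => /asboolP; apply.
- move=> a ak amin.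
  have : a \in [seq a <- iota 1 k | p a].
    by rewrite mem_filter memI ak andbT pP; apply/asboolP.
  rewrite E in_cons => /orP[/eqP -> //|aS].
  have := order_path_min ltn_trans srt => /allP /(_ a aS).
  exact: ltnW.
Qed.

Lemma aoptE {R : realType} {d : measure_display} {Omega : measurableType d}
  (P : probability Omega R) (sigma : nat -> Omega -> R) (F : R -> R) k T :
  F 0 = 0 -> (forall x, 0 <= x -> 0 <= F x) ->
  aopt P sigma F k T = hmin (fun a =>
     fine (value P sigma F (k - a) T) + F a%:R) k.
Proof.
move=> F00 F0; rewrite /aopt /hmin; congr head; apply: eq_filter => a.
apply: eq_all => b.
by rewrite (valE P sigma F (k - a) T) // (valE P sigma F (k - b) T) // -!EFinD lee_fin.
Qed.

Theorem lemma2p7 (R : realType) (d : measure_display) (Omega : measurableType d)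
    (P : probability Omega R) (lam : R) (sigma : nat -> Omega -> R)
    (F : R -> R) :
  0 < lam ->
  poisson_arrivals P lam sigma ->
  F 0 = 0 ->
  (forall x, 0 <= x -> 0 <= F x) ->
  (forall x y, 0 <= x -> x < y -> F x < F y) ->
  (forall x y t, 0 <= x -> 0 <= y -> x != y -> 0 < t < 1 ->
      F (t * x + (1 - t) * y) < t * F x + (1 - t) * F y) ->
  (forall (T : R) (k l n : nat), 0 <= T -> (1 <= k)%N ->
      (1 <= l <= k)%N -> (1 <= n <= l)%N ->
      (value P sigma F (k - n) T - value P sigma F (l - n) T
        <= value P sigma F k T - value P sigma F l T)%E) /\
  (forall (T : R) (k l : nat), 0 <= T -> (l <= k)%N ->
      (aopt P sigma F l T <= aopt P sigma F k T)%N).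
Proof.
move=> lam0 pa F00 F0 Fmono Fc.
have p1 := part1 P lam sigma F pa F00 F0 Fc.
split.
  move=> T k l n T0 k1 /andP[l1 lk] /andP[n1 nl].
  rewrite (valE P sigma F (k - n) T F00 F0) (valE P sigma F (l - n) T F00 F0).
  rewrite (valE P sigma F k T F00 F0) (valE P sigma F l T F00 F0) -!EFinB lee_fin.
  have := p1 T k l n T0 nl lk; lra.
move=> T k l T0 lk.
case: l lk => [|l] lk; first by rewrite /aopt.
set V := fun m => fine (value P sigma F m T).
rewrite !aoptE //.
have k1 : (1 <= k)%N by apply: leq_trans lk.
have := head_min (fun a => V (k - a)%N + F a%:R) k k1.
have := head_min (fun a => V (l.+1 - a)%N + F a%:R) l.+1 (isT : (1 <= l.+1)%N).
move=> /= [/andP[b1 bl] bmin bleast] [/andP[a1 ak] amin aleast].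
set b := hmin _ l.+1 in bl bmin bleast *.
set a := hmin _ k in a1 ak amin aleast *.
rewrite leqNgt; apply/negP => ab.
have al : (1 <= a <= l.+1)%N by apply/andP; split => //; lia.
have lt1 : V (l.+1 - b)%N + F b%:R < V (l.+1 - a)%N + F a%:R.
  rewrite ltNge; apply/negP => h.
  have := bleast a al => /(_ _).
  have : (b <= a)%N.
    apply: bleast => // b' b'l; apply: le_trans h _; exact: bmin.
  lia.
have le2 : V (k - a)%N + F a%:R <= V (k - b)%N + F b%:R.
  by apply: amin; lia.
have := p1 T (k - a)%N (l.+1 - a)%N (b - a)%N T0 ltac:(lia) ltac:(lia).
have -> : (k - a - (b - a) = k - b)%N by lia.
have -> : (l.+1 - a - (b - a) = l.+1 - b)%N by lia.
rewrite -/(V _) -/(V _) -/(V _) -/(V _).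
lra.
Qed.
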